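(* Let $G$ be a connected graph with $n\geq 3$ vertices. If $G$ has $k>0$ basis forced vertices, then $|E(G)|\leq \frac{n(n-1)}{2}-2k$.
   Context: All graphs are finite and simple. For vertices $u,v$ of a connected graph $G$, $d(u,v)$ is the length of a shortest $u$–$v$ path. A set $R\subseteq V(G)$ is a resolving set if for all distinct $x,y\in V(G)$ there is $r\in R$ with $d(r,x)\neq d(r,y)$. The metric dimension $\dim(G)$ is the minimum cardinality of a resolving set, and a resolving set of cardinality $\dim(G)$ is a metric basis. A vertex is a basis forced vertex if it belongs to every metric basis of $G$. *)

(* Defs.v *)
From mathcomp Require Import all_boot all_order.
Set Implicit Arguments. Unset Strict Implicit. Unset Printing Implicit Defensive.

Definition simple_graph (T : finType) (e : rel T) : Prop :=
  symmetric e /\ irreflexive e.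

Definition connected_graph (T : finType) (e : rel T) : Prop :=
  forall x y : T, connect e x y.

Definition walk_len (T : finType) (e : rel T) (x y : T) (n : nat) : bool :=
  [exists p : n.-tuple T, path e x p && (last x p == y)].

(* d(x,y): least length of an x-y walk (= shortest path length); for a
   connected graph this is < #|T|, so the bound #|T| is never reached. *)
Definition dist (T : finType) (e : rel T) (x y : T) : nat :=
  \big[minn/#|T|]_(n < #|T| | walk_len e x y n) n.

Definition resolving (T : finType) (e : rel T) (R : {set T}) : Prop :=
  forall x y : T, x != y -> exists2 r, r \in R & dist e r x != dist e r y.

Definition metric_basis (T : finType) (e : rel T) (B : {set T}) : Prop :=
  resolving e B /\ forall R : {set T}, resolving e R -> #|B| <= #|R|.

Definition basis_forced (T : finType) (e : rel T) (v : T) : Prop :=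
  forall B : {set T}, metric_basis e B -> v \in B.

Definition edge_set (T : finType) (e : rel T) : {set {set T}} :=
  [set E : {set T} | [exists x, exists y, e x y && (E == [set x; y])]].

(* Main.v *)
Require Import Defs.
From mathcomp Require Import all_boot all_order.
From mathcomp Require Import zify.
Set Implicit Arguments. Unset Strict Implicit. Unset Printing Implicit Defensive.

Lemma bigmin_spec (I : eqType) (r : seq I) (P : pred I) (F : I -> nat) N :
  (forall i, i \in r -> P i -> \big[minn/N]_(i <- r | P i) F i <= F i) /\
  (\big[minn/N]_(i <- r | P i) F i = N \/
   exists2 i, (i \in r) && P i & \big[minn/N]_(i <- r | P i) F i = F i).
Proof.
elim: r => [|a r [IH1 IH2]]; first by rewrite big_nil; split => //; left.
rewrite big_cons; case: ifP => Pa.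
  split.
    move=> i; rewrite inE => /orP[/eqP -> _|ir Pi]; first exact: geq_minl.
    by apply: leq_trans (geq_minr _ _) (IH1 _ ir Pi).
  case: (leqP (F a) (\big[minn/N]_(j <- r | P j) F j)) => h.
    by right; exists a; rewrite ?inE ?eqxx ?Pa.

  case: IH2 => [->|[i /andP[ir Pi] ->]]; first by left.
  by right; exists i => //; rewrite inE ir orbT Pi.
split.
  move=> i; rewrite inE => /orP[/eqP -> |ir Pi]; first by rewrite Pa.
  exact: IH1.
case: IH2 => [->|[i /andP[ir Pi] ->]]; first by left.
by right; exists i => //; rewrite inE ir orbT Pi.
Qed.

Lemma dist_le (T : finType) (e : rel T) x y (i : 'I_#|T|) :
  walk_len e x y i -> dist e x y <= i.
Proof.
move=> w; rewrite /dist; have [H _] := bigmin_spec (index_enum 'I_#|T|)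
  (fun n : 'I_#|T| => walk_len e x y n) (fun n : 'I_#|T| => nat_of_ord n) #|T|.
by apply: H => //; rewrite mem_index_enum.
Qed.

Lemma dist_spec (T : finType) (e : rel T) x y :
  dist e x y = #|T| \/ exists2 i : 'I_#|T|, walk_len e x y i & dist e x y = i.
Proof.
rewrite /dist; have [_ [H|[i /andP[_ Pi] H]]] := bigmin_spec (index_enum 'I_#|T|)
  (fun n : 'I_#|T| => walk_len e x y n) (fun n : 'I_#|T| => nat_of_ord n) #|T|.
  by left.
by right; exists i.
Qed.

Lemma walk0 (T : finType) (e : rel T) x y : walk_len e x y 0 = (x == y).
Proof.
apply/existsP/eqP => [[p]|->].
  by rewrite tuple0 /= => /eqP.
by exists [tuple]; rewrite /= eqxx.
Qed.

Lemma walk1 (T : finType) (e : rel T) x y : walk_len e x y 1 = e x y.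
Proof.
apply/existsP/idP => [[p]|h].
  case/tupleP: p => a p; rewrite tuple0 /= andbT => /andP[h /eqP <-] //.
by exists [tuple y]; rewrite /= h eqxx.
Qed.

Lemma card_gt0 (T : finType) (x : T) : 0 < #|T|.
Proof. by apply/card_gt0P; exists x. Qed.

Lemma dist_xx (T : finType) (e : rel T) x : dist e x x = 0.
Proof.
have h := @dist_le T e x x (Ordinal (card_gt0 x)) (_ : walk_len e x x 0).
by apply/eqP; rewrite -leqn0 h // walk0.
Qed.

Lemma dist0_eq (T : finType) (e : rel T) x y : dist e x y = 0 -> x = y.
Proof.
case: (dist_spec e x y) => [->|[i w ->] i0].
  by move=> h; have := card_gt0 x; rewrite h.
by move: w; rewrite i0 walk0 => /eqP.
Qed.

Lemma dist1_edge (T : finType) (e : rel T) x y : 1 < #|T| -> irreflexive e ->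
  (dist e x y == 1) = e x y.
Proof.
move=> hT irr; apply/eqP/idP.
  case: (dist_spec e x y) => [->|[i w ->] i1]; first by move=> h; rewrite h in hT.
  by move: w; rewrite i1 walk1.
move=> h; have xy : x != y by apply: contraTneq h => ->; rewrite irr.
have := @dist_le T e x y (Ordinal hT) (_ : walk_len e x y 1); rewrite walk1 => /(_ h).
case: (dist e x y) (@dist0_eq T e x y) => [|[|//]] // /(_ erefl) exy.
by rewrite exy eqxx in xy.
Qed.

Definition resb (T : finType) (e : rel T) (R : {set T}) :=
  [forall x, forall y, (x != y) ==> [exists r in R, dist e r x != dist e r y]].

Lemma resP (T : finType) (e : rel T) (R : {set T}) : reflect (resolving e R) (resb e R).
Proof.
apply: (iffP idP).
  move=> h x y xy; move/forallP: h => /(_ x) /forallP /(_ y) /implyP /(_ xy).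
  by case/existsP => r /andP[rR d]; exists r.
move=> h; apply/forallP => x; apply/forallP => y; apply/implyP => xy.
by have [r rR d] := h x y xy; apply/existsP; exists r; rewrite rR.
Qed.

Lemma nresP (T : finType) (e : rel T) (R : {set T}) : ~~ resb e R ->
  exists x y, x != y /\ forall r, r \in R -> dist e r x = dist e r y.
Proof.
rewrite negb_forall => /existsP[x]; rewrite negb_forall => /existsP[y].
rewrite negb_imply => /andP[xy]; rewrite negb_exists => /forallP h.
exists x, y; split => // r rR; move: (h r); rewrite rR /= => /negbNE /eqP //.
Qed.

Section Key.
Variables (T : finType) (e : rel T) (B : {set T}) (v : T).
Hypotheses (irr : irreflexive e) (esy : symmetric e) (hT : 1 < #|T|)
  (resB : resolving e B) (vB : v \in B).
Hypothesis H : forall x y, x \notin B -> y \notin B -> ~~ e v x -> ~~ e v y -> x = y.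
Local Notation D := (dist e).
Definition same x y := [forall b in B :\ v, D b x == D b y].

Lemma sameP x y b : same x y -> b \in B -> b != v -> D b x = D b y.
Proof.
by move=> /forallP /(_ b) /implyP h bB bv; apply/eqP/h; rewrite !inE bv bB.
Qed.

Lemma same_sym x y : same x y -> same y x.
Proof. by move=> /forallP h; apply/forallP => b; rewrite eq_sym; exact: h. Qed.

Lemma same_trans x y z : same x y -> same y z -> same x z.
Proof.
move=> /forallP h1 /forallP h2; apply/forallP => b; apply/implyP => bB.
by rewrite (eqP (implyP (h1 b) bB)) (eqP (implyP (h2 b) bB)).
Qed.

Lemma same_neq_v x y : same x y -> x != y -> D v x != D v y.
Proof.
move=> s xy; have [r rB d] := resB xy.
case: (eqVneq r v) => [<- //|rv]; by rewrite (sameP s rB rv) eqxx in d.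
Qed.

Lemma same_out x y : same x y -> x != y -> x = v \/ x \notin B.
Proof.
move=> s xy; case: (eqVneq x v) => [|xv]; first by left.
right; apply/negP => xB; have := sameP s xB xv; rewrite dist_xx => /esym /dist0_eq.
by move=> exy; rewrite exy eqxx in xy.
Qed.

Lemma Dedge a b : (D a b == 1) = e a b.
Proof. exact: dist1_edge. Qed.

Lemma D1 a b : e a b -> D a b = 1.
Proof. by rewrite -Dedge => /eqP. Qed.

Lemma adj_uniq a b : e v a -> e v b -> same a b -> a = b.
Proof.
move=> ha hb s; apply/eqP; apply/negPn/negP => ab.
by have := same_neq_v s ab; rewrite (D1 ha) (D1 hb).
Qed.

Lemma out_cases x y : same x y -> x != y -> x \notin B -> y \notin B -> e v x = ~~ e v y.
Proof.
move=> s xy xB yB; case: (boolP (e v x)) => hx; case: (boolP (e v y)) => hy //.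
  by rewrite (adj_uniq hx hy s) eqxx in xy.
by rewrite (H xB yB hx hy) eqxx in xy.
Qed.

Lemma fail_ne u x y : D u x = D u y -> x != y -> x != u /\ y != u.
Proof.
move=> d xy; split; apply/eqP => h; subst.
  by move: d; rewrite dist_xx => /esym /dist0_eq h; rewrite h eqxx in xy.
by move: d; rewrite dist_xx => /dist0_eq h; rewrite h eqxx in xy.
Qed.

Lemma pair_to_vp w p x y :
  (forall q, q != v -> same v q -> q != w -> q = p) ->
  (forall a b, same a b -> a != b -> a != v -> b != v -> a = w \/ b = w) ->
  same x y -> x != y -> x != w -> y != w -> D w x = D w y -> D w v = D w p.
Proof.
move=> h1 h2 s xy xw yw d.
case: (eqVneq x v) => [xv|xv].
  subst x; rewrite d (h1 y) // eq_sym //.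
case: (eqVneq y v) => [yv|yv].
  subst y; rewrite -d (h1 x) //; exact: same_sym.
by case: (h2 x y s xy xv yv) => h; [rewrite h eqxx in xw | rewrite h eqxx in yw].
Qed.


Lemma notB_neq_v x : x \notin B -> x != v.
Proof. by apply: contraNneq => ->. Qed.

Lemma pair_split a b : same a b -> a != b -> a != v -> b != v ->
  exists n o, [/\ ~~ e v n, e v o, n \notin B, o \notin B & same n o] /\
    ((a = n /\ b = o) \/ (a = o /\ b = n)).
Proof.
move=> sab ab av bv.
have aB : a \notin B by case: (same_out sab ab) => // av'; rewrite av' eqxx in av.
have bB : b \notin B.
  by case: (same_out (same_sym sab) _) => //; [rewrite eq_sym | move=> bv'; rewrite bv' eqxx in bv].
have oab := out_cases sab ab aB bB.
case: (boolP (e v a)) => ha.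
  have hb : ~~ e v b by move: oab; rewrite ha => /esym.
  exists b, a; split; [split => //; exact: same_sym | by right].
have hb : e v b by move: oab; rewrite (negbTE ha) => /esym /negbFE.
by exists a, b; split; [split | left].
Qed.

Lemma swap_exists : ~~ resb e (B :\ v) -> exists2 u, u \notin B & resolving e (u |: (B :\ v)).
Proof.
move=> nres.
case: (boolP [exists u, (u \notin B) && resb e (u |: (B :\ v))]).
  by case/existsP => u /andP[uB r]; exists u => //; apply/resP.
rewrite negb_exists => /forallP hall.
have fail u : u \notin B -> exists x y, [/\ x != y, same x y & D u x = D u y].
  move=> uB; have := hall u; rewrite uB /= => /nresP [x [y [xy h]]].
  exists x, y; split => //; last by apply: h; rewrite !inE eqxx.
  apply/forallP => b; apply/implyP => bB; apply/eqP/h; by rewrite inE bB orbT.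
exfalso.
have [x0 [y0 [xy0 h0]]] := nresP nres.
have s0 : same x0 y0 by apply/forallP => b; apply/implyP => bB; apply/eqP/h0.
case: (boolP [exists p, (p != v) && same v p]) => [/existsP[p /andP[pv svp]]|nop].
  have pB : p \notin B.
    by case: (same_out (same_sym svp) pv) => // pv'; rewrite pv' eqxx in pv.
  have [x [y [xy sxy Dxy]]] := fail p pB.
  have [xp yp] := fail_ne Dxy xy.
  have subA1 : forall x y, x != y -> same x y -> D p x = D p y -> y != p -> x = v -> False.
    move=> {x y xy sxy Dxy xp yp} x y xy sxy Dxy yp xv; subst x.
    have yv : y != v by rewrite eq_sym.
    have yB : y \notin B.
      by case: (same_out (same_sym sxy) yv) => // yv'; rewrite yv' eqxx in yv.
    have spy : same p y := same_trans (same_sym svp) sxy.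
    have py : p != y by rewrite eq_sym.
    have oc := out_cases spy py pB yB.
    have class3 c : c != v -> same v c -> c = p \/ c = y.
      move=> cv svc.
      have cB : c \notin B.
        by case: (same_out (same_sym svc) cv) => // cv'; rewrite cv' eqxx in cv.
      have scp : same c p := same_trans (same_sym svc) svp.
      have scy : same c y := same_trans (same_sym svc) sxy.
      case: (boolP (e v c)) => hc.
        case: (boolP (e v p)) => hp; first by left; exact: adj_uniq hc hp scp.
        by right; apply: adj_uniq hc _ scy; move: oc; rewrite (negbTE hp) => /esym /negbFE.
      case: (boolP (e v p)) => hp.
        by right; apply: H cB yB hc _; rewrite -oc hp.
      by left; apply: H cB pB hc hp.
    have [x' [y' [xy' sxy' Dxy']]] := fail y yB.
    have [x'y y'y] := fail_ne Dxy' xy'.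
    have Dyvp : D y v = D y p.
      apply: (pair_to_vp _ _ sxy' xy' x'y y'y Dxy').
        move=> q qv svq qy; case: (class3 q qv svq) => // qy'; by rewrite qy' eqxx in qy.
      move=> a b sab ab av bv.
      have [n [o [[hn ho nB oB sno] hab]]] := pair_split sab ab av bv.
      case: (boolP (e v p)) => hp.
        have hy : ~~ e v y by rewrite -oc hp.
        have ny : n = y := H nB yB hn hy.
        by case: hab => [[-> _]|[_ ->]]; [left | right].
      have np : n = p := H nB pB hn hp.
      have svo : same v o by apply: same_trans sno; rewrite np.
      case: (class3 o (notB_neq_v oB) svo) => oy.
        by move: ho; rewrite oy (negbTE hp).
      by case: hab => [[_ ->]|[-> _]]; [right | left].
    case: (boolP (e v p)) => hp.
      have hy : ~~ e v y by rewrite -oc hp.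
      have := D1 (_ : e p v); rewrite -esy => /(_ hp); rewrite Dxy => /eqP; rewrite Dedge => epy.
      have := D1 (_ : e y p); rewrite esy => /(_ epy); rewrite -Dyvp => /eqP; rewrite Dedge esy.
      by rewrite (negbTE hy).
    have hy : e v y by move: oc; rewrite (negbTE hp) => /esym /negbFE.
    have := D1 (_ : e y v); rewrite esy => /(_ hy); rewrite Dyvp => /eqP; rewrite Dedge esy => epy.
    have := D1 epy; rewrite -Dxy => /eqP; rewrite Dedge esy.
    by rewrite (negbTE hp).
  case: (eqVneq x v) => [xv|xv]; first exact: subA1 xy sxy Dxy yp xv.
  case: (eqVneq y v) => [yv|yv].
    by apply: (subA1 y x) => //; [rewrite eq_sym | exact: same_sym].
  have [n [o [[hn ho nB oB sno] hab]]] := pair_split sxy xy xv yv.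
  have np : n != p by case: hab => [[<- _]|[_ <-]].
  have op : o != p by case: hab => [[_ <-]|[<- _]].
  have hp : e v p.
    by case: (boolP (e v p)) => // hp; rewrite (H nB pB hn hp) eqxx in np.
  have Dpon : D p o = D p n by case: hab => [[<- <-]|[<- <-]].
  have [xa [ya [xya sxya Dxya]]] := fail o oB.
  have [xao yao] := fail_ne Dxya xya.
  have Dovp : D o v = D o p.
    apply: (pair_to_vp _ _ sxya xya xao yao Dxya).
      move=> q qv svq qo.
      have qB : q \notin B.
        by case: (same_out (same_sym svq) qv) => // qv'; rewrite qv' eqxx in qv.
      case: (boolP (e v q)) => hq.
        exact: adj_uniq hq hp (same_trans (same_sym svq) svp).
      have qn : q = n := H qB nB hq hn.
      have spo : same p o.
        apply: same_trans (same_sym svp) _; apply: same_trans sno; by rewrite -qn.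
      by rewrite (adj_uniq hp ho spo) eqxx in op.
    move=> a b sab ab av bv.
    have [n' [o' [[hn' ho' nB' oB' sno'] hab']]] := pair_split sab ab av bv.
    have n'n : n' = n := H nB' nB hn' hn.
    have o'o : o' = o.
      apply: (adj_uniq ho' ho); apply: same_trans (same_sym sno') _; by rewrite n'n.
    by case: hab' => [[_ ->]|[-> _]]; rewrite o'o; [right | left].
  have [xz [yz [xyz sxyz Dxyz]]] := fail n nB.
  have [xzn yzn] := fail_ne Dxyz xyz.
  have Dnvp : D n v = D n p.
    apply: (pair_to_vp _ _ sxyz xyz xzn yzn Dxyz).
      move=> q qv svq qn.
      have qB : q \notin B.
        by case: (same_out (same_sym svq) qv) => // qv'; rewrite qv' eqxx in qv.
      case: (boolP (e v q)) => hq.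
        exact: adj_uniq hq hp (same_trans (same_sym svq) svp).
      by rewrite (H qB nB hq hn) eqxx in qn.
    move=> a b sab ab av bv.
    have [n' [o' [[hn' ho' nB' oB' sno'] hab']]] := pair_split sab ab av bv.
    have n'n : n' = n := H nB' nB hn' hn.
    by case: hab' => [[-> _]|[_ ->]]; rewrite n'n; [left | right].
  have := D1 (_ : e o v); rewrite esy => /(_ ho); rewrite Dovp => /eqP; rewrite Dedge esy => epo.
  have := D1 epo; rewrite Dpon => /eqP; rewrite Dedge esy => enp.
  have := D1 enp; rewrite -Dnvp => /eqP; rewrite Dedge esy.
  by rewrite (negbTE hn).
have nov c : c != v -> same v c -> False.
  by move=> cv svc; move/existsPn: nop => /(_ c); rewrite cv svc.
have x0v : x0 != v.
  by apply/eqP => x0v; subst x0; apply: (nov y0) => //; rewrite eq_sym.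
have y0v : y0 != v.
  by apply/eqP => y0v; subst y0; apply: (nov x0 x0v); exact: same_sym.
have [n [o [[hn ho nB oB sno] _]]] := pair_split s0 xy0 x0v y0v.
have [x' [y' [xy' sxy' Dxy']]] := fail o oB.
have [x'o y'o] := fail_ne Dxy' xy'.
have x'v : x' != v.
  by apply/eqP => x'v; subst x'; apply: (nov y') => //; rewrite eq_sym.
have y'v : y' != v.
  by apply/eqP => y'v; subst y'; apply: (nov x' x'v); exact: same_sym.
have [n' [o' [[hn' ho' nB' oB' sno'] hab']]] := pair_split sxy' xy' x'v y'v.
have n'n : n' = n := H nB' nB hn' hn.
have o'o : o' = o.
  apply: (adj_uniq ho' ho); apply: same_trans (same_sym sno') _; by rewrite n'n.
case: hab' => [[_ yo]|[xo _]].
  by rewrite yo o'o eqxx in y'o.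
by rewrite xo o'o eqxx in x'o.
Qed.

End Key.

Lemma bin2_double n : 2 * 'C(n, 2) = n * (n - 1).
Proof.
elim: n => [//|n IH]; rewrite binS bin1 mulnDr IH; case: n {IH} => [|n] //; rewrite !subn1 /=; nia.
Qed.

Lemma setT_res (T : finType) (e : rel T) : resolving e [set: T].
Proof.
move=> x y xy; exists x; rewrite ?inE // dist_xx; apply/eqP => /esym /dist0_eq h.
by rewrite h eqxx in xy.
Qed.

Lemma exists_basis (T : finType) (e : rel T) : exists B, metric_basis e B.
Proof.
have ex : exists n, [exists R : {set T}, resb e R && (#|R| == n)].
  by exists #|[set: T]|; apply/existsP; exists setT; rewrite eqxx andbT; apply/resP/setT_res.
case: (ex_minnP ex) => n /existsP[R /andP[rR /eqP cR]] hmin.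
exists R; split; first exact/resP.
move=> R' r'; rewrite cR; apply: hmin; apply/existsP; exists R'.
by rewrite eqxx andbT; apply/resP.
Qed.

Lemma key_nonadj (T : finType) (e : rel T) (B : {set T}) v :
  simple_graph e -> 1 < #|T| -> metric_basis e B -> v \in B -> basis_forced e v ->
  exists x y, [/\ x != y, x \notin B, y \notin B, ~~ e v x & ~~ e v y].
Proof.
move=> [esy irr] hT [resB minB] vB forced.
case: (boolP [exists x, exists y, [&& x != y, x \notin B, y \notin B, ~~ e v x & ~~ e v y]]).
  case/existsP => x /existsP[y /and5P[a b c d f]]; by exists x, y.
move=> hn; exfalso.
have H : forall x y, x \notin B -> y \notin B -> ~~ e v x -> ~~ e v y -> x = y.
  move=> x y xB yB hx hy; apply/eqP; apply/negPn/negP => xy; move/negP: hn; apply.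
  by apply/existsP; exists x; apply/existsP; exists y; rewrite xy xB yB hx hy.
have cB : #|B| = #|B :\ v|.+1 by rewrite (cardsD1 v B) vB.
have nres : ~~ resb e (B :\ v).
  apply/negP => /resP r; have := minB _ r; by rewrite cB ltnn.
have [u uB ru] := swap_exists irr esy hT resB vB H nres.
have : v \in u |: (B :\ v).
  apply: forced; split => // R rR; rewrite cardsU1 !inE negb_and uB orbT.
  by rewrite add1n -cB; exact: minB.
rewrite !inE eqxx /= orbF => /eqP vu; by rewrite -vu vB in uB.
Qed.

Unset Implicit Arguments.
Theorem theorem9 (T : finType) (e : rel T) (F : {set T}) :
  simple_graph e -> connected_graph e -> 3 <= #|T| ->
  (forall v : T, v \in F <-> basis_forced e v) ->
  0 < #|F| ->
  2 * #|edge_set e| + 4 * #|F| <= #|T| * (#|T| - 1).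
Proof.
move=> sg _ hT3 hF _.
have hT : 1 < #|T| by apply: leq_trans hT3.
have [esy irr] := sg.
have [B bB] := exists_basis e.
have FB : forall v, v \in F -> v \in B by move=> v /hF; apply.
pose S := [set p : T * T | (p.1 \in F) && ((p.2 \notin F) && ~~ e p.1 p.2)].
have cS : 2 * #|F| <= #|S|.
  have -> : #|S| = \sum_(v in F) \sum_(x | (x \notin F) && ~~ e v x) 1.
    rewrite pair_big_dep /= -sum1_card; apply: eq_bigl => p; by rewrite inE.
  rewrite mulnC -sum_nat_const; apply: leq_sum => v vF.
  have [x [y [xy xB yB hx hy]]] := key_nonadj sg hT bB (FB v vF) (iffLR (hF v) vF).
  have xF : x \notin F by apply: contra xB; exact: FB.
  have yF : y \notin F by apply: contra yB; exact: FB.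
  rewrite (bigD1 x) /=; last by rewrite xF hx.
  rewrite (bigD1 y) /=; last by rewrite yF hy eq_sym.
  by rewrite addnA leq_addr.
pose NE := [set [set p.1; p.2] | p in S].
have cNE : #|NE| = #|S|.
  apply: card_in_imset => [[a b]] [c d]; rewrite !inE /= => /andP[aF /andP[bF _]] /andP[cF /andP[dF _]] h.
  have ac : a = c.
    have : a \in [set c; d] by rewrite -h !inE eqxx.
    rewrite !inE => /orP[/eqP //|/eqP ad]; by rewrite ad (negbTE dF) in aF.
  have bd : b = d.
    have : b \in [set c; d] by rewrite -h !inE eqxx orbT.
    rewrite !inE => /orP[/eqP bc|/eqP //]; by rewrite bc cF in bF.
  by rewrite ac bd.
pose S2 := [set E : {set T} | #|E| == 2].
have sub1 : edge_set e :|: NE \subset S2.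
  apply/subsetP => E; rewrite !inE => /orP[].
    case/existsP => x /existsP[y /andP[exy /eqP ->]].
    have xy : x != y by apply/eqP => exy'; rewrite exy' irr in exy.
    by rewrite cards2 xy.
  case/imsetP => [[a b]]; rewrite !inE /= => /andP[aF /andP[bF _]] ->.
  have ab : a != b by apply/eqP => ab'; rewrite -ab' aF in bF.
  by rewrite cards2 ab.
have disj : edge_set e :&: NE = set0.
  apply/setP => E; rewrite !inE; apply/negP => /andP[].
  case/existsP => x /existsP[y /andP[exy /eqP ->]].
  case/imsetP => [[a b]]; rewrite !inE /= => /andP[aF /andP[bF hab]] h.
  have : a \in [set x; y] by rewrite h !inE eqxx.
  have : b \in [set x; y] by rewrite h !inE eqxx orbT.
  have ab : a != b by apply/eqP => ab'; rewrite -ab' aF in bF.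
  rewrite !inE => /orP[/eqP bx|/eqP bY] /orP[/eqP ax|/eqP ay].
  - by rewrite ax bx eqxx in ab.
  - by rewrite ay bx esy exy in hab.
  - by rewrite ax bY exy in hab.
  - by rewrite ay bY eqxx in ab.
have := subset_leq_card sub1; rewrite cardsU disj cards0 subn0 /S2 card_draws.
move=> h; rewrite -bin2_double; move: h; rewrite cNE => h; lia.
Qed.
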